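(* Preferred semantics is serialisable with the selection function $\alpha_{adm}(X,Y,Z)=X\cup Y\cup Z$ and the termination function $\beta_{pr}(F,S)=1$ if $\mathrm{IS}(F)=\emptyset$ and $\beta_{pr}(F,S)=0$ otherwise.
   Context: An abstract argumentation framework (AF) is a pair $F=(A,R)$ with $A$ a finite subset of a fixed universal set of arguments $\mathfrak{A}$ and $R\subseteq A\times A$ ($a\to b$ means $(a,b)\in R$). For $S\subseteq A$: $S^+=\{a\mid \exists b\in S: b\to a\}$, $S^-=\{a\mid\exists b\in S: a\to b\}$; for sets $S,S'$, $S\to S'$ means $S^+\cap S'\neq\emptyset$. $S$ is admissible if it is conflict-free and every attacker of an element of $S$ is attacked by some element of $S$. A preferred extension is an inclusion-maximal admissible set. An initial set is a non-empty admissible set with no non-empty admissible proper subset; $\mathrm{IS}(F)$ is the set of initial sets. An initial set $S$ is unattacked if $S^-=\emptyset$; unchallenged if $S^-\neq\emptyset$ and no $S'\in\mathrm{IS}(F)$ has $S'\to S$; challenged if some $S'\in\mathrm{IS}(F)$ has $S'\to S$. Write $\mathrm{IS}^{u}(F),\mathrm{IS}^{uc}(F),\mathrm{IS}^{c}(F)$ for these sets. The reduct is $F^S=(A',R\cap(A'\times A'))$ with $A'=A\setminus(S\cup S^+)$. A selection function $\alpha$ maps any three sets $X,Y,Z$ of sets of arguments to a subset of $X\cup Y\cup Z$; a termination function $\beta$ maps pairs $(F,S)$ to $\{0,1\}$. Transitions: $(F,S)\to(F^{S'},S\cup S')$ whenever $S'\in\alpha(\mathrm{IS}^u(F),\mathrm{IS}^{uc}(F),\mathrm{IS}^c(F))$.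 $(F,S)\leadsto^{\alpha,\beta}(F',S')$ means $(F',S')$ is reachable from $(F,S)$ in finitely many (possibly zero) transitions and $\beta(F',S')=1$. $\mathcal{E}^{\alpha,\beta}(F)$ is the set of all $S$ with $(F,\emptyset)\leadsto^{\alpha,\beta}(F',S)$ for some $F'$. A semantics $\sigma$ is serialisable with $\alpha,\beta$ if $\sigma(F)=\mathcal{E}^{\alpha,\beta}(F)$ for all AFs $F$. *)

(* Defs.v *)
From HB Require Import structures.
From mathcomp Require Import all_boot finmap.

Set Implicit Arguments.
Unset Strict Implicit.
Unset Printing Implicit Defensive.

Local Open Scope fset_scope.

Section AFDefs.
Variable T : choiceType.

Definition AF := ({fset T} * {fset (T * T)})%type.

Definition wf_AF (F : AF) : Prop :=
  forall a b, (a, b) \in F.2 -> a \in F.1 /\ b \in F.1.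

Definition att (F : AF) (a b : T) : bool := (a, b) \in F.2.

Definition in_plus (F : AF) (S : {fset T}) (a : T) : bool :=
  [exists b : S, att F (val b) a].

Definition in_minus (F : AF) (S : {fset T}) (a : T) : bool :=
  [exists b : S, att F a (val b)].

Definition set_att (F : AF) (S S' : {fset T}) : Prop :=
  exists a, in_plus F S a /\ a \in S'.

Definition conflict_free (F : AF) (S : {fset T}) : Prop :=
  forall a b, a \in S -> b \in S -> ~ att F a b.

Definition admissible (F : AF) (S : {fset T}) : Prop :=
  S `<=` F.1 /\ conflict_free F S /\
  forall a b, b \in S -> att F a b -> exists2 c, c \in S & att F c a.

Definition preferred (F : AF) (S : {fset T}) : Prop :=
  admissible F S /\ forall S', admissible F S' -> S `<=` S' -> S' = S.

Definition initial (F : AF) (S : {fset T}) : Prop :=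
  admissible F S /\ S != fset0 /\
  forall S', admissible F S' -> S' != fset0 -> S' `<` S -> False.

Definition IS_u (F : AF) (S : {fset T}) : Prop :=
  initial F S /\ forall a, ~~ in_minus F S a.

Definition IS_uc (F : AF) (S : {fset T}) : Prop :=
  initial F S /\ (exists a, in_minus F S a) /\
  forall S', initial F S' -> ~ set_att F S' S.

Definition IS_c (F : AF) (S : {fset T}) : Prop :=
  initial F S /\ exists2 S', initial F S' & set_att F S' S.

Definition reduct (F : AF) (S : {fset T}) : AF :=
  let A' := [fset a in F.1 | (a \notin S) && ~~ in_plus F S a] in
  (A', [fset p in F.2 | (p.1 \in A') && (p.2 \in A')]).

(* A selection function maps three families to a subfamily of
   their union; a termination function is represented as a Prop-valued
   predicate ("beta(F,S) = 1"). *)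
Definition family := {fset T} -> Prop.
Definition selection := family -> family -> family -> family.
Definition selection_ok (alpha : selection) : Prop :=
  forall X Y Z S, alpha X Y Z S -> X S \/ Y S \/ Z S.
Definition termination := AF -> {fset T} -> Prop.

Definition state := (AF * {fset T})%type.

Definition step (alpha : selection) (s s' : state) : Prop :=
  exists S', alpha (IS_u s.1) (IS_uc s.1) (IS_c s.1) S' /\
             s' = (reduct s.1 S', s.2 `|` S').

Inductive reach (alpha : selection) : state -> state -> Prop :=
| reach_refl s : reach alpha s s
| reach_step s s' s'' : step alpha s s' -> reach alpha s' s'' -> reach alpha s s''.

Definition serial_ext (alpha : selection) (beta : termination) (F : AF)
  (S : {fset T}) : Prop :=
  exists F', reach alpha (F, fset0) (F', S) /\ beta F' S.

Definition alpha_adm : selection := fun X Y Z S => X S \/ Y S \/ Z S.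

Definition beta_pr : termination := fun F _ => forall S, ~ initial F S.

End AFDefs.

(* Main.v *)
Require Import Defs.
From HB Require Import structures.
From mathcomp Require Import all_boot finmap.
From Stdlib Require Import Classical.
From mathcomp Require Import zify.

Set Implicit Arguments.
Unset Strict Implicit.
Unset Printing Implicit Defensive.
Local Open Scope fset_scope.

Section Proofs.
Variable T : choiceType.
Implicit Types (F G : AF T) (S U I : {fset T}).

Lemma in_plusP F S a : reflect (exists2 b, b \in S & att F b a) (in_plus F S a).
Proof.
apply: (iffP existsP) => [[b Hb]|[b bS Hb]].
  by exists (fsval b) => //; apply: fsvalP.
by exists [` bS].
Qed.

Lemma in_reduct F S a :
  (a \in (reduct F S).1) = [&& a \in F.1, a \notin S & ~~ in_plus F S a].
Proof. by rewrite /reduct /= inE. Qed.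

Lemma att_reduct F S a b :
  att (reduct F S) a b = [&& att F a b, a \in (reduct F S).1 & b \in (reduct F S).1].
Proof. by rewrite /att {1}/reduct /= inE /=. Qed.

Lemma in_reduct2 F S p :
  (p \in (reduct F S).2) = [&& p \in F.2, p.1 \in (reduct F S).1 & p.2 \in (reduct F S).1].
Proof. by rewrite {1}/reduct /= inE. Qed.

Lemma combine F S S' : wf_AF F -> admissible F S -> admissible (reduct F S) S' ->
  admissible F (S `|` S').
Proof.
move=> wf [SF [cfS defS]] [S'F [cfS' defS']].
split; [|split].
- apply/fsubsetP => x; rewrite inE => /orP[xS|xS'].
    exact: (fsubsetP SF).
  by move: (fsubsetP S'F x xS'); rewrite in_reduct => /and3P[].
- move=> a b; rewrite !inE => /orP[aS|aS'] /orP[bS|bS'] hab.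
  + exact: (cfS a b).
  + move: (fsubsetP S'F b bS'); rewrite in_reduct => /and3P[_ _ /in_plusP]; apply.
    by exists a.
  + have [c cS hca] := defS a b bS hab.
    move: (fsubsetP S'F a aS'); rewrite in_reduct => /and3P[_ _ /in_plusP]; apply.
    by exists c.
  + apply: (cfS' a b aS' bS'); rewrite att_reduct hab.
    by rewrite (fsubsetP S'F a aS') (fsubsetP S'F b bS').
- move=> a b; rewrite inE => /orP[bS|bS'] hab.
    by have [c cS hca] := defS a b bS hab; exists c; rewrite ?inE ?cS.
  have bR := fsubsetP S'F b bS'.
  have aF : a \in F.1 by case: (wf a b hab).
  case: (boolP (a \in S)) => aS.
    move: bR; rewrite in_reduct => /and3P[_ _ /in_plusP]; case.
    by exists a.
  case: (boolP (in_plus F S a)) => [/in_plusP [c cS hca]|naS].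
    by exists c; rewrite ?inE ?cS.
  have aR : a \in (reduct F S).1 by rewrite in_reduct aF aS naS.
  have [c cS' hca] := defS' a b bS' (ltac:(by rewrite att_reduct hab aR bR)).
  exists c; first by rewrite inE cS' orbT.
  by move: hca; rewrite att_reduct => /andP[].
Qed.

Lemma diff F S U : admissible F S -> admissible F U -> S `<=` U ->
  admissible (reduct F S) (U `\` S).
Proof.
move=> [SF [cfS defS]] [UF [cfU defU]] SU.
have notatt : forall x, x \in U -> ~~ in_plus F S x.
  move=> x xU; apply/in_plusP => [[c cS hcx]].
  exact: (cfU c x (fsubsetP SU c cS) xU hcx).
have inR : forall x, x \in U `\` S -> x \in (reduct F S).1.
  move=> x; rewrite inE => /andP[xS xU].
  by rewrite in_reduct (fsubsetP UF x xU) xS notatt.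
split; [|split].
- by apply/fsubsetP.
- move=> a b; rewrite !inE => /andP[_ aU] /andP[_ bU]; rewrite att_reduct.
  by case/and3P => h _ _; apply: (cfU a b aU bU h).
- move=> a b bD; rewrite att_reduct => /and3P[hab aR _].
  have := bD; rewrite inE => /andP[_ bU].
  have [c cU hca] := defU a b bU hab.
  have cS : c \notin S.
    apply/negP => cS; move: aR; rewrite in_reduct => /and3P[_ _ /in_plusP]; apply.
    by exists c.
  have cD : c \in U `\` S by rewrite inE cS cU.
  exists c => //.
  by rewrite att_reduct hca aR inR.
Qed.

Lemma exists_initial G : forall n U, (#|` U| <= n)%N -> admissible G U -> U != fset0 ->
  exists2 I, initial G I & I `<=` U.
Proof.
elim=> [|n IH] U.
  by rewrite leqn0 => /eqP /cardfs0_eq -> _; rewrite eqxx.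
move=> hU adU U0.
case: (classic (exists S', admissible G S' /\ S' != fset0 /\ S' `<` U)).
  move=> [S' [adS' [S'0 S'U]]].
  have : (#|` S'| <= n)%N.
    by have := fproper_ltn_card S'U; move: hU; clear; move=> h1 h2; exact: (leq_trans h2 h1).
  move=> /IH /(_ adS' S'0) [I HI IS']; exists I => //.
  exact: (fsubset_trans IS' (fproper_sub S'U)).
move=> H; exists U => //; split => //; split => // S' a b c; apply: H; by exists S'.
Qed.

Lemma in_plusU F S S' a : in_plus F (S `|` S') a = in_plus F S a || in_plus F S' a.
Proof.
apply/in_plusP/orP => [[b]|[/in_plusP [b bS h]|/in_plusP [b bS h]]].
- by rewrite inE => /orP[bS|bS'] h; [left|right]; apply/in_plusP; exists b.
- by exists b; rewrite ?inE ?bS.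
- by exists b; rewrite ?inE ?bS ?orbT.
Qed.

Lemma in_plus_red F S S' a : S' `<=` (reduct F S).1 -> a \in (reduct F S).1 ->
  in_plus (reduct F S) S' a = in_plus F S' a.
Proof.
move=> sub aR.
apply/in_plusP/in_plusP => [[b bS' h]|[b bS' h]]; exists b => //.
  by move: h; rewrite att_reduct => /andP[].
by rewrite att_reduct h aR (fsubsetP sub b bS').
Qed.

Lemma reduct_reduct F S S' : S' `<=` (reduct F S).1 ->
  reduct (reduct F S) S' = reduct F (S `|` S').
Proof.
move=> sub.
have e1 : (reduct (reduct F S) S').1 = (reduct F (S `|` S')).1.
  apply/fsetP => a.
  case: (boolP (a \in (reduct F S).1)) => aR.
    rewrite in_reduct aR in_plus_red //.
    move: aR; rewrite !in_reduct in_plusU inE negb_or negb_or.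
    by case/and3P => -> -> ->.
  rewrite in_reduct (negbTE aR) /=; apply/esym/negbTE.
  move: aR; rewrite !in_reduct in_plusU inE !negb_or.
  by apply: contra => /and3P[-> /andP[-> _] /andP[-> _]].
rewrite [LHS]surjective_pairing [RHS]surjective_pairing e1; congr pair.
have sub2 : forall a, a \in (reduct (reduct F S) S').1 -> a \in (reduct F S).1.
  by move=> a; rewrite in_reduct => /and3P[].
apply/fsetP => p; rewrite !in_reduct2 -e1.
case: (boolP (p.1 \in (reduct (reduct F S) S').1)) => h1; last by rewrite !andbF.
case: (boolP (p.2 \in (reduct (reduct F S) S').1)) => h2; last by rewrite !andbF.
by rewrite (sub2 _ h1) (sub2 _ h2) !andbT.
Qed.
Lemma reduct0 F : wf_AF F -> reduct F fset0 = F.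
Proof.
move=> wf.
have np : forall a, in_plus F fset0 a = false.
  by move=> a; apply/negbTE/in_plusP => [[b]]; rewrite inE.
have e1 : (reduct F fset0).1 = F.1.
  by apply/fsetP => a; rewrite in_reduct np inE andbT.
rewrite [LHS]surjective_pairing [RHS]surjective_pairing e1; congr pair.
apply/fsetP => p; rewrite in_reduct2 e1.
case: (boolP (p \in F.2)) => //= hp.
by have := wf p.1 p.2; rewrite -surjective_pairing => /(_ hp) [-> ->].
Qed.

Lemma adm0 F : admissible F fset0.
Proof. by split; [exact: fsub0set|split=> [a b|a b]; rewrite inE]. Qed.

Lemma initial_alpha G I : initial G I -> alpha_adm (IS_u G) (IS_uc G) (IS_c G) I.
Proof.
move=> HI; rewrite /alpha_adm.
case: (classic (exists a, in_minus G I a)) => [hm|hm].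
  case: (classic (exists2 S', initial G S' & set_att G S' I)) => [hc|hc].
    by right; right.
  by right; left; split => //; split => // S' iS' sa; apply: hc; exists S'.
left; split => // a; apply/negP => h; apply: hm; by exists a.
Qed.

Lemma alpha_initial G I : alpha_adm (IS_u G) (IS_uc G) (IS_c G) I -> initial G I.
Proof. by case=> [[]|[[]|[]]]. Qed.

Lemma reduct_disj F S I x : I `<=` (reduct F S).1 -> x \in I -> x \notin S.
Proof. by move=> sub xI; move: (fsubsetP sub x xI); rewrite in_reduct => /and3P[]. Qed.

Lemma fwd F S : wf_AF F -> preferred F S -> forall n S0,
  (#|` S| - #|` S0| <= n)%N -> admissible F S0 -> S0 `<=` S ->
  reach (@alpha_adm T) (reduct F S0, S0) (reduct F S, S).
Proof.
move=> wf [adS maxS]; elim=> [|n IH] S0 hn ad0 sub0.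
  case: (eqVfproper sub0) => [->|pr]; first exact: reach_refl.
  by have := fproper_ltn_card pr; move: hn; rewrite leqn0 subn_eq0 => h1 h2; have := leq_trans h2 h1; rewrite ltnn.
case: (eqVfproper sub0) => [->|pr]; first exact: reach_refl.
have U0 : S `\` S0 != fset0.
  rewrite fsetD_eq0; apply/negP => h; move: pr; rewrite fproperE h.
  by rewrite andbF.
have adU := diff ad0 adS sub0.
have [I iI IU] := exists_initial (leqnn _) adU U0.
have [[IR _] [I0 _]] := iI.
have adI : admissible F (S0 `|` I) := combine wf ad0 (proj1 iI).
have subI : S0 `|` I `<=` S.
  rewrite fsubUset sub0 /=; apply: (fsubset_trans IU); exact: fsubsetDl.
have prI : S0 `<` S0 `|` I.
  apply: fproperUl; apply/negP => h.
  have [x xI] := fset0Pn _ I0.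
  by have := reduct_disj IR xI; rewrite (fsubsetP h x xI).
apply: (reach_step (s' := (reduct F (S0 `|` I), S0 `|` I))).
  exists I; split; first exact: initial_alpha.
  by rewrite /= reduct_reduct.
apply: IH => //.
have h1 := fproper_ltn_card prI.
have h2 := fsubset_leq_card subI.
move: hn h1 h2; clear; lia.
Qed.

Lemma bwd F : wf_AF F -> forall s t, reach (@alpha_adm T) s t ->
  forall S0, s = (reduct F S0, S0) -> admissible F S0 ->
  t = (reduct F t.2, t.2) /\ admissible F t.2.
Proof.
move=> wf s t; elim=> [s1|s1 s2 s3 [I [hI E2]] _ IH] S0 E ad0; first by subst.
subst s1; rewrite /= in hI E2 *.
have iI := alpha_initial hI.
have [[IR _] _] := iI.
apply: (IH (S0 `|` I)); first by rewrite E2 reduct_reduct.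
exact: (combine wf ad0 (proj1 iI)).
Qed.

End Proofs.

Theorem theorem6 (T : choiceType) (F : AF T) :
  wf_AF F ->
  forall S : {fset T}, preferred F S <-> serial_ext (@alpha_adm T) (@beta_pr T) F S.
Proof.
move=> wf S; split.
  move=> prS; have [adS maxS] := prS.
  exists (reduct F S); split.
    rewrite -{1}(reduct0 wf).
    apply: (fwd wf prS (leqnn _) (adm0 F) (fsub0set _)).
  move=> I iI.
  have [[IR _] [I0 _]] := iI.
  have e := maxS _ (combine wf adS (proj1 iI)) (fsubsetUl _ _).
  have [x xI] := fset0Pn _ I0.
  have := reduct_disj IR xI.
  by rewrite -e inE xI orbT.
move=> [F' [hr hb]].
have [e adS] := bwd wf hr (S0 := fset0) (ltac:(by rewrite reduct0)) (adm0 F).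
case: e => eF; rewrite eF in hb.
split => // S' adS' sub.
apply/eqP; rewrite eqEfsubset sub andbT.
apply/negP => /negP h.
have U0 : S' `\` S != fset0 by rewrite fsetD_eq0.
have [I iI _] := exists_initial (leqnn _) (diff adS adS' sub) U0.
exact: (hb I iI).
Qed.
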